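(* For every $\gamma\in[0,1)$, the function $h_\gamma(\mu)=\mu+\frac{\gamma}{1-\gamma}\gamma^{\mu}$ is monotonically increasing in $\mu$ on $(0,\infty)$. *)

(* Defs.v *)
(* R : realType, real exponent via powR (a `^ x),
   which satisfies 0 `^ x = 0 for x <> 0, matching gamma^mu at gamma = 0. *)
From mathcomp Require Import all_boot all_order all_algebra.
From mathcomp Require Import all_classical all_reals all_analysis.
Import Order.TTheory GRing.Theory Num.Theory.
Local Open Scope ring_scope.

Definition h_gamma {R : realType} (gamma mu : R) : R :=
  mu + gamma / (1 - gamma) * (gamma `^ mu).

(* Main.v *)
Require Import Defs.
From mathcomp Require Import all_boot all_order all_algebra.
From mathcomp Require Import all_classical all_reals all_analysis.
From mathcomp Require Import ring lra.
Import Order.TTheory GRing.Theory Num.Theory.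
Local Open Scope ring_scope.

Theorem lemma2 (R : realType) (gamma : R) (hg0 : 0 <= gamma) (hg1 : gamma < 1)
  (mu1 mu2 : R) (h1 : 0 < mu1) (h12 : mu1 <= mu2) :
  h_gamma gamma mu1 <= h_gamma gamma mu2.
Proof.
rewrite /h_gamma.
have [->|gn0] := eqVneq gamma 0.
  by rewrite mul0r !mul0r !addr0.
have gp : 0 < gamma by rewrite lt_neqAle eq_sym gn0.
rewrite /powR (negbTE gn0).
set L := ln gamma.
have gE : expR L = gamma by rewrite /L lnK // posrE.
have hL : gamma - gamma * L <= 1.
  have := expR_ge1Dx (- L); rewrite expRN gE => H.
  have : gamma * (1 + - L) <= gamma * gamma^-1 by rewrite ler_pM2l.
  by rewrite mulfV // mulrDr mulr1 mulrN.
have L0 : L <= 0.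
  rewrite -expR_le1 gE; exact: ltW.
set d := mu2 - mu1.
have e2 : expR (mu2 * L) = expR (mu1 * L) * expR (d * L).
  by rewrite -expRD /d; congr expR; ring.
rewrite e2.
set a := expR (mu1 * L); set E := expR (d * L).
have a0 : 0 <= a by exact: expR_ge0.
have a1 : a <= 1 by rewrite expR_le1 mulr_ge0_le0 // ltW.
have dge : 0 <= d by rewrite subr_ge0.
have E1 : E <= 1 by rewrite expR_le1 mulr_ge0_le0.
have Ege : 1 + d * L <= E by exact: expR_ge1Dx.
have g1 : 0 < 1 - gamma by rewrite subr_gt0.
have key : gamma * a * (1 - E) <= d * (1 - gamma).
  have s1 : gamma * a * (1 - E) <= gamma * (1 - E).
    rewrite -mulrA ler_pM2l // ler_piMl //; lra.
  have s2 : gamma * (1 - E) <= gamma * (- (d * L)).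
    rewrite ler_pM2l //; lra.
  have s3 : gamma * (- (d * L)) <= d * (1 - gamma).
    have : d * (gamma - gamma * L) <= d * 1 by rewrite ler_wpM2l.
    move=> H; lra.
  lra.
set c := gamma / (1 - gamma).
have hc : c * (1 - gamma) = gamma by rewrite /c divfK // gt_eqF.
have k2 : c * a * (1 - E) <= d.
  rewrite -(ler_pM2r g1).
  have -> : c * a * (1 - E) * (1 - gamma) = gamma * a * (1 - E).
    by rewrite -[in RHS]hc; ring.
  exact: key.
have -> : c * (a * E) = c * a - c * a * (1 - E) by ring.
rewrite /d in k2; lra.
Qed.
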